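(* Let a trained classification model have feature space $\Phi\subseteq\mathbb{R}^f$ and produce logits $z=Wx_\phi+b$ for a feature vector $x_\phi\in\Phi$, where $W\in\mathbb{R}^{n\times f}$, $b\in\mathbb{R}^n$, $n$ the number of classes. Let $x$ be an input whose feature vector $x_\phi$ has distance at least $\delta$ from the closest decision boundary in $\Phi$. Then $$\max\mathrm{softmax}(Wx_\phi+b)\;\ge\;\frac{e^{\delta\rho(W)}}{e^{\delta\rho(W)}+(n-1)},\qquad \rho(W)=\min_{i\ne j,\ i,j\in\{1,\dots,n\}}\|W[j]-W[i]\|_2.$$
   Context: $W[k]$ denotes the $k$-th row of $W$. The classification of an input is the index of its largest logit. The decision boundary between classes $i$ and $j$ is the set of $y\in\Phi$ with $W[i]y+b[i]=W[j]y+b[j]\ge W[k]y+b[k]$ for all $k\notin\{i,j\}$; the distance to the closest decision boundary is the Euclidean distance from $x_\phi$ to the union of the decision boundaries between the class of $x$ and the other classes. $\mathrm{softmax}(z)[k]=e^{z[k]}/\sum_{l}e^{z[l]}$.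
   Formalization: The feature space Φ is all of $\mathbb{R}^f$, so the decision boundaries, and the distance from $x_\phi$ to them, range over all y ∈ $\mathbb{R}^f$ rather than only over y ∈ Φ. The statement above fails without it. *)

(* Defs.v *)
From HB Require Import structures.
From mathcomp Require Import all_boot all_order all_algebra.
From mathcomp Require Import all_classical all_reals all_analysis.
Set Implicit Arguments. Unset Strict Implicit. Unset Printing Implicit Defensive.
Import Order.TTheory GRing.Theory Num.Theory.
Local Open Scope ring_scope.
Local Open Scope classical_set_scope.

Definition enorm (R : realType) (m p : nat) (A : 'M[R]_(m, p)) : R :=
  Num.sqrt (\sum_(i < m) \sum_(j < p) A i j ^+ 2).

Definition logit (R : realType) (n f : nat) (W : 'M[R]_(n, f)) (b : 'cV[R]_n)
  (y : 'cV[R]_f) (k : 'I_n) : R := (W *m y + b) k 0.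

Definition softmax (R : realType) (n : nat) (z : 'cV[R]_n) (k : 'I_n) : R :=
  expR (z k 0) / \sum_(l < n) expR (z l 0).

(* max_k softmax(z)[k]  (all entries are positive, so 0 is a neutral start) *)
Definition max_softmax (R : realType) (n : nat) (z : 'cV[R]_n) : R :=
  \big[Num.max/0]_(k < n) softmax z k.

Definition decision_boundary (R : realType) (n f : nat) (W : 'M[R]_(n, f))
  (b : 'cV[R]_n) (i j : 'I_n) : set 'cV[R]_f :=
  [set y | logit W b y i = logit W b y j /\
           forall k, k != i -> k != j -> logit W b y k <= logit W b y i].

Definition rho (R : realType) (n f : nat) (W : 'M[R]_(n, f)) : R :=
  inf [set enorm (row ij.2 W - row ij.1 W) |
        ij in [set ij : 'I_n * 'I_n | ij.1 != ij.2]].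

(* Main.v *)
Require Import Defs.
From HB Require Import structures.
From mathcomp Require Import all_boot all_order all_algebra.
From mathcomp Require Import all_classical all_reals all_analysis.
From mathcomp Require Import lra.
Import Order.TTheory GRing.Theory Num.Theory.
Local Open Scope ring_scope.

Lemma logit_shift (R : realType) (n f : nat) (W : 'M[R]_(n, f)) (b : 'cV[R]_n)
  (x d : 'cV[R]_f) (s : R) k :
  logit W b (x + s *: d) k = logit W b x k + s * \sum_i W k i * d i 0.
Proof.
rewrite /logit !mxE.
under eq_bigr => i _ do rewrite !mxE mulrDr.
rewrite big_split /= mulr_sumr -addrA [_ + b k 0]addrC addrA; congr (_ + _).
by apply: eq_bigr => i _; rewrite mulrCA.
Qed.

Lemma enormZ (R : realType) (m p : nat) (s : R) (A : 'M[R]_(m, p)) :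
  enorm (s *: A) = `|s| * enorm A.
Proof.
rewrite /enorm.
have -> : \sum_(i < m) \sum_(j < p) (s *: A) i j ^+ 2
   = s ^+ 2 * \sum_(i < m) \sum_(j < p) A i j ^+ 2.
  rewrite mulr_sumr; apply: eq_bigr => i _; rewrite mulr_sumr.
  by apply: eq_bigr => j _; rewrite mxE exprMn.
by rewrite sqrtrM ?sqrtr_sqr // sqr_ge0.
Qed.

Theorem corollary1 (R : realType) (n f : nat) (W : 'M[R]_(n, f)) (b : 'cV[R]_n)
  (x_phi : 'cV[R]_f) (c : 'I_n) (delta : R) :
  (* c is the class of x: index of a largest logit *)
  (forall k : 'I_n, logit W b x_phi k <= logit W b x_phi c) ->
  (* distance from x_phi to the union of boundaries between c and other classes is >= delta *)
  (forall (j : 'I_n) (y : 'cV[R]_f), j != c ->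
     decision_boundary W b c j y -> delta <= enorm (y - x_phi)) ->
  max_softmax (W *m x_phi + b) >=
    expR (delta * rho W) / (expR (delta * rho W) + (n%:R - 1)).
Proof.
move=> Hmax Hdist.
set z := logit W b x_phi.
set t := delta * rho W.
have key : forall j, j != c -> t <= z c - z j.
  move=> j jc.
  have ej : 0 <= z c - z j by rewrite subr_ge0.
  set D := fun i : 'I_f => W j i - W c i.
  set N2 := \sum_(i < f) D i ^+ 2.
  have N2ge0 : 0 <= N2 by apply: sumr_ge0 => i _; apply: sqr_ge0.
  have hN : enorm (row j W - row c W) = Num.sqrt N2.
    rewrite /enorm big_ord1; congr Num.sqrt; apply: eq_bigr => i _.
    by rewrite !mxE.
  set S := ([set enorm (row ij.2 W - row ij.1 W) |
        ij in [set ij : 'I_n * 'I_n | ij.1 != ij.2]])%classic.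
  have Sne : (S !=set0)%classic.
    by exists (enorm (row j W - row c W)); exists (c, j) => //=; rewrite eq_sym.
  have Slb : lbound S 0.
    by move=> _ [ij _ <-]; rewrite /enorm sqrtr_ge0.
  have rho_ge0 : 0 <= rho W by apply: lb_le_inf.
  have rho_le : rho W <= Num.sqrt N2.
    rewrite -hN; apply: ge_inf; first by exists 0.
    by exists (c, j) => //=; rewrite eq_sym.
  have [dle0|dgt0] := lerP delta 0.
    apply: le_trans ej; rewrite /t; exact: mulr_le0_ge0.
  apply: (@le_trans _ _ (delta * Num.sqrt N2)).
    by rewrite /t ler_wpM2l // ltW.
  have [N20|N2ne0] := eqVneq N2 0.
    by rewrite N20 sqrtr0 mulr0.
  have N2gt0 : 0 < N2 by rewrite lt_def N2ne0.
  set d : 'cV[R]_f := \col_i D i.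
  set a := fun k : 'I_n => \sum_(i < f) (W k i - W c i) * D i.
  have hA : forall s k, logit W b (x_phi + s *: d) k - logit W b (x_phi + s *: d) c
      = - (z c - z k) + s * a k.
    move=> s k; rewrite !logit_shift.
    have -> : a k = \sum_(i < f) W k i * D i - \sum_(i < f) W c i * D i.
      by rewrite /a -sumrB; apply: eq_bigr => i _; rewrite mulrBl.
    have E : forall l, \sum_(i < f) W l i * d i 0 = \sum_(i < f) W l i * D i.
      by move=> l; apply: eq_bigr => i _; rewrite mxE.
    rewrite !E -/z; lra.
  have ajN : a j = N2 by apply: eq_bigr => i _; rewrite expr2.
  have ac0 : a c = 0 by rewrite /a big1 // => i _; rewrite subrr mul0r.
  have Pj : 0 < a j by rewrite ajN.
  set r := fun k => (z c - z k) / a k.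
  case: (@arg_minP _ R _ j [pred k | 0 < a k] r Pj) => k Pk Hk.
  set s := r k.
  have ek : 0 <= z c - z k by rewrite subr_ge0.
  have s0 : 0 <= s by rewrite /s /r divr_ge0 // ltW.
  have kc : k != c by apply/eqP => e; move: Pk; rewrite inE e ac0 ltxx.
  have Hb : decision_boundary W b c k (x_phi + s *: d).
    split.
      apply/eqP; rewrite eq_sym -subr_eq0 hA /s /r divfK ?addNr //.
      have Pk' : 0 < a k by move: Pk; rewrite inE.
      by rewrite gt_eqF.
    move=> l lc lk; rewrite -subr_le0 hA.
    have el : 0 <= z c - z l by rewrite subr_ge0.
    have [al|al] := ltrP 0 (a l).
      have h : s * a l <= z c - z l by rewrite -ler_pdivlMr //; exact: (Hk l al).
      lra.
    have : s * a l <= 0 by apply: mulr_ge0_le0.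
    lra.
  have := Hdist k _ kc Hb.
  have -> : x_phi + s *: d - x_phi = s *: d by rewrite addrC addKr.
  rewrite enormZ ger0_norm //.
  have -> : enorm d = Num.sqrt N2.
    rewrite /enorm; congr Num.sqrt; apply: eq_bigr => i _.
    by rewrite big_ord1 mxE.
  have sle : s <= (z c - z j) / N2 by rewrite -ajN; exact: (Hk j Pj).
  have q0 : 0 < Num.sqrt N2 by rewrite sqrtr_gt0.
  move=> Hd.
  have : delta <= (z c - z j) / Num.sqrt N2.
    apply: (le_trans Hd).
    have -> : (z c - z j) / Num.sqrt N2 = (z c - z j) / N2 * Num.sqrt N2.
      rewrite -{2}(sqr_sqrtr N2ge0) expr2 invfM mulrA -mulrA mulVf ?mulr1 //.
      by rewrite gt_eqF.
    by rewrite ler_wpM2r // ltW.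
  by rewrite ler_pdivlMr.
have n0 : (0 < n)%N by apply: leq_ltn_trans (ltn_ord c).
rewrite /max_softmax.
apply: le_trans (le_bigmax _ _ c).
rewrite /softmax.
have zE : forall k, (W *m x_phi + b) k 0 = z k by [].
rewrite (bigD1 c) //= !zE.
set q := \sum_(l | l != c) expR ((W *m x_phi + b) l 0).
have q0 : 0 <= q by apply: sumr_ge0 => l _; apply: expR_ge0.
have hq : expR t * q <= (n%:R - 1) * expR (z c).
  rewrite /q mulr_sumr.
  apply: (@le_trans _ _ (\sum_(l | l != c) expR (z c))).
    apply: ler_sum => l lc; rewrite zE -expRD ler_expR.
    have := key l lc; lra.
  by rewrite sumr_const cardC1 card_ord -[_ *+ n.-1]mulr_natr -subn1 natrB // mulrC.
have et : 0 < expR t by apply: expR_gt0.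
have ec : 0 < expR (z c) by apply: expR_gt0.
have n1 : 0 <= n%:R - 1 :> R by rewrite subr_ge0 ler1n.
rewrite ler_pdivrMr; last by lra.
rewrite mulrAC ler_pdivlMr; last by lra.
nra.
Qed.
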